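(* Let $G$ be a cyclic group of odd order which is not a prime power. Then the power graph $\mathscr{G}(G)$ is not overfull.
   Context: For a finite group $G$, the power graph $\mathscr{G}(G)$ is the simple graph with vertex set the elements of $G$, in which two distinct elements $a,b$ are adjacent if and only if one is a power of the other. For a finite simple graph $\Gamma$ on $n$ vertices with maximum vertex degree $\Delta(\Gamma)$, $\Gamma$ is called overfull if $|E(\Gamma)| / \lfloor n/2 \rfloor > \Delta(\Gamma)$. *)

(* Defs.v *)
From mathcomp Require Import all_boot all_order all_algebra all_fingroup all_solvable.
Set Implicit Arguments. Unset Strict Implicit. Unset Printing Implicit Defensive.
Import GRing.Theory Num.Theory.

Section PowerGraph.
Variable gT : finGroupType.
Variable G : {group gT}.

Definition pg_adj (a b : gT) : bool :=
  (a != b) && ((a \in <[b]>%g) || (b \in <[a]>%g)).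

Definition pg_edges : {set {set gT}} :=
  [set E : {set gT} | [exists a in G, exists b in G, pg_adj a b && (E == [set a; b])]].

Definition pg_deg (a : gT) : nat := #|[set b in G | pg_adj a b]|.

Definition pg_maxdeg : nat := \max_(a in G) pg_deg a.

Definition pg_overfull : bool :=
  (pg_maxdeg%:R < (#|pg_edges|)%:R / ((#|G|)./2)%:R :> rat)%R.
End PowerGraph.

(* Main.v *)
Require Import Defs.
From mathcomp Require Import all_boot all_order all_algebra all_fingroup all_solvable.
From mathcomp Require Import zify.

Lemma key (gT : finGroupType) (G : {group gT}) (A B : {set gT}) :
  A \subset G -> B \subset G ->
  (forall x y, x \in A -> y \in B -> [&& x != y, ~~ pg_adj x y & ~~ pg_adj y x]) ->
  #|pg_edges G| + #|A| * #|B| <= 'C(#|G|, 2).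
Proof.
move=> sAG sBG nadj.
set D := [set E : {set gT} | E \subset G & #|E| == 2].
set X := [set [set u.1; u.2] | u in setX A B].
have cX : #|X| = #|A| * #|B|.
  rewrite card_in_imset ?cardsX //.
  move=> [x1 y1] [x2 y2]; rewrite !inE /= => /andP[x1A y1B] /andP[x2A y2B] e.
  have /and3P[n11 _ _] := nadj _ _ x1A y1B.
  have /and3P[n12 _ _] := nadj _ _ x1A y2B.
  have /and3P[n21 _ _] := nadj _ _ x2A y1B.
  have /and3P[n22 _ _] := nadj _ _ x2A y2B.
  have : x1 \in [set x2; y2] by rewrite -e !inE eqxx.
  have : y1 \in [set x2; y2] by rewrite -e !inE eqxx orbT.
  rewrite !inE => /orP[/eqP ey|/eqP ey] /orP[/eqP ex|/eqP ex]; subst;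
   first [done | by have /and3P[] := nadj _ _ x1A y1B; rewrite eqxx
    | by have /and3P[] := nadj _ _ x1A y2B; rewrite eqxx
    | by have /and3P[] := nadj _ _ x2A y1B; rewrite eqxx
    | by have /and3P[] := nadj _ _ x2A y2B; rewrite eqxx].
have sXD : X \subset D.
  apply/subsetP=> E /imsetP[[x y]]; rewrite !inE /= => /andP[xA yB] ->.
  have /and3P[nxy _ _] := nadj _ _ xA yB.
  rewrite cards2 nxy andbT; apply/subsetP=> z; rewrite !inE => /orP[]/eqP->.
    exact: (subsetP sAG).
  exact: (subsetP sBG).
have sED : pg_edges G \subset D :\: X.
  apply/subsetP=> E; rewrite !inE => /existsP[a /andP[aG /existsP[b /andP[bG /andP[adj /eqP->]]]]].
  have nab : a != b by case/andP: adj.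
  rewrite cards2 nab andbT.
  have -> : [set a; b] \subset G.
    by apply/subsetP=> z; rewrite !inE => /orP[]/eqP->.
  rewrite andbT; apply/imsetP=> [[[x y]]]; rewrite !inE /= => /andP[xA yB] eE.
  have /and3P[nxy nxy1 nyx1] := nadj _ _ xA yB.
  have : x \in [set a; b] by rewrite eE !inE eqxx.
  have : y \in [set a; b] by rewrite eE !inE eqxx orbT.
  rewrite !inE => /orP[/eqP ey|/eqP ey] /orP[/eqP ex|/eqP ex]; subst;
    first [by rewrite adj in nyx1 | by rewrite adj in nxy1 | by rewrite eqxx in nxy].
have := subset_leq_card sED.
rewrite cardsD (setIidPr sXD) cX /D cards_draws.
have := subset_leq_card sXD; rewrite cX /D cards_draws.
move=> h1 h2; by rewrite addnC -leq_subRL.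
Qed.

Import Order.TTheory GRing.Theory Num.Theory.

Theorem mainTheorem7 (gT : finGroupType) (G : {group gT}) :
  cyclic G -> odd #|G| ->
  ~ (exists p k : nat, prime p /\ #|G| = p ^ k) ->
  ~~ pg_overfull G.
Proof.
move=> cG oddG notpp.
set n := #|G|.
have n0 : 0 < n := cardG_gt0 G.
have n1 : 1 < n.
  rewrite ltnNge; apply/negP => hn; apply: notpp; exists 2, 0; split=> //.
  by rewrite expn0; apply/eqP; rewrite eqn_leq hn n0.
have pr_p := pdiv_prime n1.
set p := pdiv n in pr_p.
have pn : p %| n := pdiv_dvd n.
have p_odd : odd p := dvdn_odd pn oddG.
have p2 : 1 < p := prime_gt1 pr_p.
have p3 : 3 <= p.
  have : p != 2 by apply: contraTneq p_odd => ->.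
  lia.
have solG : solvable G := abelian_sol (cyclic_abelian cG).
have [S hS] := Hall_exists p solG.
have [H hH] := Hall_exists p^' solG.
have cS : #|S| = n`_p := card_Hall hS.
have cH : #|H| = n`_p^' := card_Hall hH.
set P := n`_p in cS. set m := n`_p^' in cH.
have Pm : P * m = n by rewrite /P /m partnC.
have lp : 0 < logn p n by rewrite logn_gt0 mem_primes pr_p n0 pn.
have P3 : 3 <= P.
  have pP : p %| P by rewrite /P p_part dvdn_exp.
  by apply: leq_trans p3 (dvdn_leq (part_gt0 _ _) pP).
have m3 : 3 <= m.
  have m0 : 0 < m := part_gt0 _ _.
  have mo : odd m := dvdn_odd (dvdn_part _ _) oddG.
  have m_ne1 : m != 1.
    apply/eqP=> m1; case: notpp; exists p, (logn p n); split=> //.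
    by rewrite -/n -p_part -/P -Pm m1 muln1.
  have : m != 2 by apply: contraTneq mo => ->.
  lia.
have triv z : z \in S -> z \in H -> z = 1%g.
  move=> zS zH; apply/eqP; rewrite -order_eq1; apply/eqP.
  exact: (pnat_1 (mem_p_elt (pHall_pgroup hS) zS) (mem_p_elt (pHall_pgroup hH) zH)).
have sSG := pHall_sub hS. have sHG := pHall_sub hH.
have hkey := @key gT G (S :\ 1%g) (H :\ 1%g).
have nadj : forall x y, x \in S :\ 1%g -> y \in H :\ 1%g ->
   [&& x != y, ~~ pg_adj x y & ~~ pg_adj y x].
  move=> x y; rewrite !inE => /andP[x1 xS] /andP[y1 yH].
  have nxH : x \notin H by apply: contra x1 => xH; rewrite (triv x xS xH).
  have nyS : y \notin S by apply: contra y1 => yS; rewrite (triv y yS yH).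
  have nxy : x != y by apply: contraNneq nxH => ->.
  have nxcy : x \notin <[y]>%g.
    by apply: contra nxH => /(subsetP _ x); apply; rewrite cycle_subG.
  have nycx : y \notin <[x]>%g.
    by apply: contra nyS => /(subsetP _ y); apply; rewrite cycle_subG.
  by rewrite /pg_adj nxy eq_sym nxy (negbTE nxcy) (negbTE nycx).
have cA : #|S :\ 1%g| = P - 1.
  by rewrite -cS (cardsD1 1%g S) group1 /= addKn.
have cB : #|H :\ 1%g| = m - 1 by rewrite -cH (cardsD1 1%g H) group1 /= addKn.
have := hkey (subset_trans (subsetDl _ _) sSG) (subset_trans (subsetDl _ _) sHG) nadj.
rewrite cA cB => hE.
have hD : n - 1 <= pg_maxdeg G.
  apply: leq_trans (leq_bigmax_cond _ (group1 G)).
  rewrite /pg_deg (_ : [set b in G | pg_adj 1%g b] = G :\ 1%g).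
    by rewrite /n (cardsD1 1%g G) group1 /= addKn.
  apply/setP=> b; rewrite !inE /pg_adj group1 /= andbT.
  by rewrite eq_sym andbC.
set E := #|pg_edges G| in hE *.
set D := pg_maxdeg G in hD *.
have := odd_double_half n; rewrite oddG => hn.
set k := n./2 in hn *.
have k0 : 0 < k by lia.
have hC : 'C(n, 2) = n * k by rewrite bin2odd // -hn /= doubleK.
have fin : E <= D * k.
  rewrite hC in hE.
  have h2 : P * m - 1 <= 2 * ((P - 1) * (m - 1)).
    move: P3 m3; clear; move: P m => P' m' P3 m3.
    rewrite -(subnK P3) -(subnK m3); move: (P' - 3) (m' - 3) => a b.
    have -> : a + 3 - 1 = a + 2 by lia.
    have -> : b + 3 - 1 = b + 2 by lia.
    rewrite !mulnDl !mulnDr; lia.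
  rewrite Pm in h2.
  have h3 : (n - 1) * k <= D * k by rewrite leq_mul2r hD orbT.
  have h4 : (n - 1) * k + k = n * k by rewrite -{2}(mul1n k) -mulnDl subnK.
  set X := (P - 1) * (m - 1) in hE h2.
  lia.
rewrite /pg_overfull -/E -/D -/n -/k -leNgt ler_pdivrMr ?ltr0n // -natrM ler_nat.
exact: fin.
Qed.
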